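(* Let $K$ be a field (of arbitrary characteristic). Let $\{n_i\mid i\ge1\}$ be a strictly increasing infinite sequence of positive integers such that $n_{i+1}-n_i\ne 1$ for infinitely many $i\ge1$, and let $V$ be the $K$-subspace of $K[x]$ spanned by the monomials $x^{n_i}$ ($i\ge1$). Then the following are equivalent: 1) $\mathfrak{r}(V)=\{0\}$; 2) $V$ is a Mathieu subspace of $K[x]$; 3) there is no integer $d\ge1$ such that $md\in\{n_i\mid i\ge1\}$ for all $m\ge1$.
   Context: For a subset $V$ of $K[x]$, $\mathfrak{r}(V)=\{a\in K[x]\mid a^m\in V\text{ for all } m\gg0\}$. A $K$-subspace $V$ of a commutative $K$-algebra $\mathcal{A}$ is a Mathieu subspace if for all $a,b\in\mathcal{A}$ with $a^m\in V$ for all $m\ge 1$, one has $a^mb\in V$ for all $m\gg 0$. *)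

(* Defs.v *)
From HB Require Import structures.
From mathcomp Require Import all_boot all_order all_algebra.
Set Implicit Arguments. Unset Strict Implicit. Unset Printing Implicit Defensive.
Import GRing.Theory.
Local Open Scope ring_scope.

Definition monomial_span (K : fieldType) (n : nat -> nat) : {poly K} -> Prop :=
  fun p => exists (k : nat) (c : nat -> K),
    p = \sum_(i < k) c i *: 'X^(n i).

Definition rad_set (A : comRingType) (V : A -> Prop) : A -> Prop :=
  fun a => exists N : nat, forall m : nat, (N <= m)%N -> V (a ^+ m).

(* Mathieu subspace of a commutative algebra A (V is assumed to be a subspace). *)
Definition mathieu_subspace (A : comRingType) (V : A -> Prop) : Prop :=
  forall a b : A, (forall m : nat, (1 <= m)%N -> V (a ^+ m)) ->
    exists N : nat, forall m : nat, (N <= m)%N -> V (a ^+ m * b).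

(* Main.v *)
Require Import Defs.
From HB Require Import structures.
From mathcomp Require Import all_boot all_order all_algebra.
From mathcomp Require Import zify.
Import GRing.Theory.
Local Open Scope ring_scope.

Lemma span_coef (K : fieldType) (n : nat -> nat) (p : {poly K}) (j : nat) :
  monomial_span n p -> p`_j != 0 -> exists i, n i = j.
Proof.
case=> k [c ->]; rewrite coef_sumMXn.
case: (boolP [exists i : 'I_k, n i == j]) => [/existsP [i /eqP <-]|h].
  by move=> _; exists i.
rewrite big1 ?eqxx // => i /andP [_ hi].
by move: h; rewrite negb_exists => /forallP /(_ i); rewrite hi.
Qed.

Arguments span_coef {K n p j}.

Lemma span0 (K : fieldType) (n : nat -> nat) : monomial_span n (0 : {poly K}).
Proof. by exists 0%N, (fun _ => 0); rewrite big_ord0. Qed.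

Lemma span_Xn (K : fieldType) (n : nat -> nat) i :
  monomial_span n ('X^(n i) : {poly K}).
Proof.
exists i.+1, (fun j => (j == i)%:R).
rewrite big_ord_recr /= eqxx scale1r big1 ?add0r // => j _.
by rewrite /= (ltn_eqF (ltn_ord j)) scale0r.
Qed.

Lemma coef0X (K : fieldType) (p : {poly K}) m : (p ^+ m)`_0 = p`_0 ^+ m.
Proof.
elim: m => [|m IH]; first by rewrite !expr0 coef1.
by rewrite !exprS coef0M IH.
Qed.

Theorem lemma3p4 (K : fieldType) (n : nat -> nat)
  (hpos : (0 < n 0)%N)
  (hinc : forall i : nat, (n i < n i.+1)%N)
  (hgap : forall N : nat, exists i : nat, (N <= i)%N /\ n i.+1 <> (n i).+1) :
  let V := @monomial_span K n in
  ((forall a : {poly K}, rad_set V a -> a = 0) <-> mathieu_subspace V) /\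
  (mathieu_subspace V <->
     ~ (exists d : nat, (1 <= d)%N /\
          forall m : nat, (1 <= m)%N -> exists i : nat, n i = (m * d)%N)).
Proof.
move=> V.
have nlt : forall i j, (i < j)%N -> (n i < n j)%N := homo_ltn ltn_trans hinc.
have nle : forall i j, (i <= j)%N -> (n i <= n j)%N.
  move=> i j; rewrite leq_eqVlt => /orP [/eqP ->//|/nlt/ltnW //].
have ninv : forall i j, (n i < n j)%N -> (i < j)%N.
  move=> i j h; rewrite ltnNge; apply/negP => /nle; by rewrite leqNgt h.
have nge : forall i, (i <= n i)%N.
  elim=> // i IH; exact: leq_ltn_trans IH (hinc i).
have key : forall a : {poly K}, a != 0 -> forall N,
    (forall m, (N <= m)%N -> V (a ^+ m)) ->
    exists d : nat, (1 <= d)%N /\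
          forall m : nat, (1 <= m)%N -> exists i : nat, n i = (m * d)%N.
  move=> a a0 N hN.
  have exP : exists k, a`_k != 0.
    by exists (size a).-1; rewrite -lead_coefE lead_coef_eq0.
  case: (ex_minnP exP) => k ak kmin.
  have ha : a = 'X^k * drop_poly k a.
    rewrite -{1}(poly_take_drop k a) mulrC.
    suff -> : take_poly k a = 0 by rewrite add0r.
    apply/polyP => i; rewrite coef_take_poly coef0.
    case: ifP => // hik; apply/eqP; apply: contraT => hne.
    by have := kmin i hne; rewrite leqNgt hik.
  have cm : forall m, (a ^+ m)`_(k * m) = a`_k ^+ m.
    move=> m; rewrite {1}ha exprMn -exprM coefXnM ltnn subnn coef0X.
    by rewrite coef_drop_poly add0n.
  have akm : forall m, (a ^+ m)`_(k * m) != 0.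
    by move=> m; rewrite cm expf_neq0.
  have k0 : (0 < k)%N.
    rewrite lt0n; apply/negP => /eqP k0.
    have := span_coef (hN N (leqnn N)) (akm N); rewrite k0 mul0n.
    case=> i hi; have := nle 0%N i (leq0n i); rewrite hi leqn0 => /eqP h.
    by move: hpos; rewrite h.
  exists (k * N.+1)%N; split; first by lia.
  move=> m m1.
  have hm : (N <= m * N.+1)%N by nia.
  case: (span_coef (hN _ hm) (akm (m * N.+1)%N)) => i hi.
  by exists i; rewrite hi; lia.
have c31 : ~ (exists d : nat, (1 <= d)%N /\
          forall m : nat, (1 <= m)%N -> exists i : nat, n i = (m * d)%N) ->
    forall a, rad_set V a -> a = 0.
  move=> nd a [N hN]; apply/eqP; apply: contraT => a0.
  by case: nd; exact: (key a a0 N hN).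
have c12 : (forall a, rad_set V a -> a = 0) -> mathieu_subspace V.
  move=> h a b ha.
  have -> : a = 0 by apply: h; exists 1%N.
  exists 1%N => m hm; rewrite expr0n; case: m hm => // m _.
  by rewrite mul0r; exact: span0.
have c23 : mathieu_subspace V -> ~ (exists d : nat, (1 <= d)%N /\
          forall m : nat, (1 <= m)%N -> exists i : nat, n i = (m * d)%N).
  move=> hM [d [d1 hd]].
  have hX : forall m, (1 <= m)%N -> V ('X^d ^+ m).
    move=> m m1; rewrite -exprM; case: (hd m m1) => i hi.
    by rewrite mulnC -hi; exact: span_Xn.
  case: (hM _ (\poly_(i < d) (1 : K)) hX) => N hN.
  have hall : forall j, (N * d <= j)%N -> exists i, n i = j.
    move=> j hj.
    have hm : (N <= j %/ d)%N by rewrite leq_divRL.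
    apply: (span_coef (hN _ hm)).
    rewrite -exprM coefXnM.
    have hle : (d * (j %/ d) <= j)%N by rewrite mulnC leq_trunc_div.
    rewrite ltnNge hle /= coef_poly.
    have -> : (j - d * (j %/ d) = j %% d)%N.
      by rewrite [(d * _)%N]mulnC {1}(divn_eq j d) addnC addnK.
    by rewrite ltn_pmod // oner_neq0.
  case: (hgap (N * d)%N) => i [hi hne].
  case: (hall (n i).+1) => [|i' hi'].
    by apply: leq_trans (leqW (nge i)); exact: hi.
  have : (i < i')%N by apply: ninv; rewrite hi'.
  move/nle => h; apply: hne; apply/eqP; rewrite eqn_leq hinc andbT.
  by rewrite -hi'.
split; split.
- exact: c12.
- by move=> hM; apply: c31; apply: c23.
- exact: c23.
- by move=> h; apply: c12; apply: c31.
Qed.
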